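(* Let $\mathbf{H}$ be a finite commutative semihypergroup with states $e_1,\dots,e_n$ that is derived from a group. Then for each $i$, all diagonal entries of the matrix $A_i$ are equal: $a_{i,j}(j)=a_{i,i}(i)$ for all $i,j\in\{1,\dots,n\}$.
   Context: A finite commutative semihypergroup $\mathbf{H}$ with $n$ states $e_1,\dots,e_n$ is given by a convolution $e_i*e_j=\sum_{k=1}^n a_{i,j}(k)e_k$ ($i,j=1,\dots,n$), extended bilinearly, where $a_{i,j}(k)\ge 0$, $\sum_{k=1}^n a_{i,j}(k)=1$ for all $i,j$, the convolution is associative and commutative ($a_{i,j}(k)=a_{j,i}(k)$). Let $a_{i,j}\in\mathbb{R}^n$ denote the column vector $(a_{i,j}(1),\dots,a_{i,j}(n))^T$; let $A_i$ be the $n\times n$ matrix with columns $a_{i,1},\dots,a_{i,n}$ (so its $(k,j)$ entry is $a_{i,j}(k)$) and $B_i$ the matrix with columns $a_{1,i},\dots,a_{n,i}$. $\mathbf{H}$ is called derived from a group if it satisfies condition (A): the set $\{a_{i,j}: 1\le i,j\le n\}$ contains exactly $n$ distinct vectors, and for each $i$ the columns of $A_i$ are linearly independent and the columns of $B_i$ are linearly independent. *)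

(* Defs.v *)
(* Coefficients in an arbitrary real field R (the paper: reals). *)
From HB Require Import structures.
From mathcomp Require Import all_boot all_order all_algebra.
Set Implicit Arguments. Unset Strict Implicit. Unset Printing Implicit Defensive.
Import Order.TTheory GRing.Theory Num.Theory.
Local Open Scope ring_scope.

(* Structure constants: a i j k = a_{i,j}(k), i.e. e_i * e_j = sum_k a i j k e_k. *)
Definition hyper_coeffs (R : realFieldType) (n : nat) := 'I_n -> 'I_n -> 'I_n -> R.

Definition is_comm_semihypergroup (R : realFieldType) (n : nat)
  (a : hyper_coeffs R n) : Prop :=
  [/\ (forall i j k, 0 <= a i j k),
      (forall i j, \sum_(k < n) a i j k = 1),
      (forall i j k, a i j k = a j i k) &
      (* associativity: (e_i*e_j)*e_l = e_i*(e_j*e_l), coefficient of e_m *)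
      (forall i j l m,
         \sum_(k < n) a i j k * a k l m = \sum_(k < n) a j l k * a i k m)].

Definition avec (R : realFieldType) (n : nat) (a : hyper_coeffs R n)
  (i j : 'I_n) : 'cV[R]_n := \col_(k < n) a i j k.

Definition Amx (R : realFieldType) (n : nat) (a : hyper_coeffs R n) (i : 'I_n)
  : 'M[R]_n := \matrix_(k < n, j < n) a i j k.
Definition Bmx (R : realFieldType) (n : nat) (a : hyper_coeffs R n) (i : 'I_n)
  : 'M[R]_n := \matrix_(k < n, j < n) a j i k.

Definition cols_indep (R : realFieldType) (n : nat) (M : 'M[R]_n) : bool :=
  row_free M^T.

Definition derived_from_group (R : realFieldType) (n : nat)
  (a : hyper_coeffs R n) : Prop :=
  [/\ size (undup [seq avec a ij.1 ij.2 | ij <- enum [set: 'I_n * 'I_n]]) = n,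
      (forall i, cols_indep (Amx a i)) &
      (forall i, cols_indep (Bmx a i))].

(* Main.v *)
Require Import Defs.
From HB Require Import structures.
From mathcomp Require Import all_boot all_order all_algebra.
Import Order.TTheory GRing.Theory Num.Theory.
Local Open Scope ring_scope.

Lemma unit_cancel (R : realFieldType) (n : nat) (M : 'M[R]_n) (x y : 'cV[R]_n) :
  cols_indep M -> M *m x = M *m y -> x = y.
Proof.
rewrite /cols_indep row_free_unit unitmx_tr => hM hxy.
by rewrite -(mulKmx hM x) hxy mulKmx.
Qed.

Lemma avec_inj (R : realFieldType) (n : nat) (a : hyper_coeffs R n) i :
  cols_indep (Amx a i) -> injective (avec a i).
Proof.
move=> hM k k' e.
have h : forall k, avec a i k = Amx a i *m delta_mx k 0.
  move=> l; apply/matrixP => m z; rewrite !mxE (bigD1 l) //= big1.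
    by rewrite !mxE !eqxx ord1 addr0 mulr1.
  by move=> p /negbTE hp; rewrite !mxE hp mulr0.
have := @unit_cancel _ _ _ _ _ hM (etrans (esym (h k)) (etrans e (h k'))).
move/matrixP => /(_ k 0); rewrite !mxE !eqxx /=.
by case: eqP => // _ /eqP; rewrite oner_eq0.
Qed.

Theorem corollary2 (R : realFieldType) (n : nat) (a : hyper_coeffs R n)
  (hH : is_comm_semihypergroup a) (hA : derived_from_group a) :
  forall i j : 'I_n, a i j j = a i i i.
Proof.
case: hH => _ _ hC hAs; case: hA => hsz hAi _.
move=> i0 j0; set b := i0.
have injb := @avec_inj _ _ a b (hAi b).
have hex : forall i j, exists s, avec a i j = avec a b s.
  move=> i j.
  set S := undup _ in hsz.
  have hU : uniq [seq avec a b s | s <- enum 'I_n].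
    by rewrite map_inj_uniq // enum_uniq.
  have hSub : {subset [seq avec a b s | s <- enum 'I_n] <= S}.
    move=> x /mapP [s _ ->]; rewrite mem_undup.
    by apply/mapP; exists (b, s) => //; rewrite mem_enum in_setT.
  have hS : (size S <= size [seq avec a b s | s <- enum 'I_n])%N.
    by rewrite hsz size_map size_enum_ord.
  have [_ hT] := uniq_min_size hU hSub hS.
  have : avec a i j \in S.
    by rewrite mem_undup; apply/mapP; exists (i, j) => //; rewrite mem_enum in_setT.
  by rewrite -hT => /mapP [s _ ->]; exists s.
pose sig i j := odflt j [pick s | avec a i j == avec a b s].
have sigP : forall i j, avec a i j = avec a b (sig i j).
  move=> i j; rewrite /sig; case: pickP => [s /eqP //|h].
  by have [s hs] := hex i j; move: (h s); rewrite hs eqxx.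
have ent : forall i j m, a i j m = a b (sig i j) m.
  by move=> i j m; move: (sigP i j) => /matrixP /(_ m 0); rewrite !mxE.
have siginj : forall i, injective (sig i).
  move=> i k k' e; apply: (@avec_inj _ _ a i (hAi i)).
  by rewrite (sigP i k) (sigP i k') e.
have trans : forall i j k, a b j k = a b (sig i j) (sig i k).
  move=> i j k.
  pose c : 'cV[R]_n := \col_s a b j (invF (siginj i) s).
  have E1 : forall m, \sum_(k < n) a b j k * a i k m
                    = \sum_(k < n) a i j k * a b k m.
    move=> m; rewrite -(hAs i b j m).
    by rewrite -(hAs b i j m); apply: eq_bigr => l _; rewrite hC.
  have : Amx a b *m c = Amx a b *m avec a b (sig i j).
    apply/matrixP => m z; rewrite ord1 !mxE.
    rewrite (reindex_inj (siginj i)) /=.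
    transitivity (\sum_(k < n) a b j k * a i k m).
      by apply: eq_bigr => l _; rewrite !mxE invF_f (ent i l m) mulrC.
    rewrite E1; apply: eq_bigr => l _; rewrite !mxE.
    by rewrite (ent i j l) mulrC.
  move/(@unit_cancel _ _ _ _ _ (hAi b)) => /matrixP /(_ (sig i k) 0).
  by rewrite !mxE invF_f.
have sigjb : forall j, sig j b = j.
  move=> j; apply: injb; rewrite -sigP.
  by apply/matrixP => m z; rewrite !mxE hC.
have sigC : forall i j, sig i j = sig j i.
  move=> i j; apply: injb; rewrite -!sigP.
  by apply/matrixP => m z; rewrite !mxE hC.
have key : forall i j, a i j j = a b i b.
  move=> i j; rewrite ent (trans j i b) sigjb sigC //.
by rewrite (key i0 j0) (key i0 i0).
Qed.
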